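(* Let $0<\sigma<\frac{1}{2}$. There is a constant $C_\sigma>0$ depending only on $\sigma$ such that for all $\xi_1,\xi_2\in\mathbb{R}$ with $\xi_1\leq\xi_2$, the function $$E_1(\xi;\xi_1,\xi_2)=\begin{cases} e^{\xi-\xi_1}-e^{\xi-\xi_2}, & \xi\leq\xi_1,\\ 0, & \text{otherwise},\end{cases}$$ satisfies $$\left(\int_{\mathbb{R}}|k|^{2\sigma}\,\big|\mathcal{F}(E_1(\cdot;\xi_1,\xi_2))(k)\big|^2\,dk\right)^{1/2}\leq C_\sigma\,(\xi_2-\xi_1).$$
   Context: The Fourier transform is normalized as $\mathcal{F}(f)(k)=\frac{1}{2\pi}\int_{\mathbb{R}}e^{-\mathrm{i}k\xi}f(\xi)\,d\xi$ for $k\in\mathbb{R}$. *)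

(* Defs.v *)
From HB Require Import structures.
From mathcomp Require Import all_boot all_order all_algebra.
From mathcomp Require Import all_classical all_reals all_analysis.
Set Implicit Arguments. Unset Strict Implicit. Unset Printing Implicit Defensive.
Import Order.TTheory GRing.Theory Num.Theory.
Local Open Scope classical_set_scope.
Local Open Scope ring_scope.

Definition E1 (R : realType) (xi1 xi2 : R) (xi : R) : R :=
  if xi <= xi1 then expR (xi - xi1) - expR (xi - xi2) else 0.

(* Real and imaginary parts of the Fourier transform
   F(f)(k) = (1/(2 pi)) \int e^{-i k xi} f(xi) dxi of a real-valued f:
   Re F(f)(k) = (1/(2pi)) \int cos(k xi) f(xi) dxi,
   Im F(f)(k) = -(1/(2pi)) \int sin(k xi) f(xi) dxi. *)
Definition fourier_re (R : realType) (f : R -> R) (k : R) : R :=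
  (2 * pi)^-1 * Rintegral lebesgue_measure setT (fun x => cos (k * x) * f x).

Definition fourier_im (R : realType) (f : R -> R) (k : R) : R :=
  - ((2 * pi)^-1 * Rintegral lebesgue_measure setT (fun x => sin (k * x) * f x)).

Definition fourier_sqnorm (R : realType) (f : R -> R) (k : R) : R :=
  fourier_re f k ^+ 2 + fourier_im f k ^+ 2.

(* Main.v *)
Require Import Defs.
From HB Require Import structures.
From mathcomp Require Import all_boot all_order all_algebra.
From mathcomp Require Import all_classical all_reals all_analysis.
From mathcomp Require Import ring lra measurable_realfun.
Import Order.TTheory GRing.Theory Num.Theory.
Import numFieldNormedType.Exports.
Local Open Scope classical_set_scope.
Local Open Scope ring_scope.
Section S.
Context {R : realType}.
Notation mu := (@lebesgue_measure R).

Lemma is_derive_oppc (F : R -> R) (x d : R) :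
  is_derive (- x) 1 F d -> is_derive x 1 (fun y => - F (- y)) d.
Proof.
move=> h.
have h2 : is_derive x 1 (F \o -%R) (d * -1).
  apply: is_derive1_comp; exact: is_deriveNid.
have h3 := @is_deriveN _ _ _ _ _ _ _ h2.
rewrite (_ : d = - (d * -1)); last by rewrite mulrN1 opprK.
exact: h3.
Qed.

Lemma ftc_Ny (f F : R -> R) (b l : R) :
  continuous f -> (forall x, x <= b -> 0 <= f x) ->
  (forall x : R, is_derive x (1:R) F (f x)) -> F x @[x --> -oo] --> l ->
  (\int[mu]_(x in `]-oo, b]) (f x)%:E = (F b - l)%:E)%E.
Proof.
move=> cf f0 dF Fl.
have -> : `]-oo, b]%classic = `]-oo, - (- b)]%classic :> set R by rewrite opprK.
rewrite ge0_integration_by_substitutionNy; last 2 first.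
- exact: continuous_subspaceT.
- by move=> x; rewrite in_itv/= opprK => /ltW; exact: f0.
have dG : forall x : R, is_derive x (1:R) (fun y => - F (- y)) (f (- x)).
  by move=> x; apply: is_derive_oppc.
rewrite (@ge0_continuous_FTC2y R (f \o -%R) (fun x => - F (- x)) (-b) (-l)).
- by rewrite !opprK -EFinB opprK addrC.
- by move=> x; rewrite lerNl => h; exact: f0.
- apply: continuous_subspaceT => x.
  exact: (@continuous_comp _ _ _ -%R f x (@oppr_continuous R R x) (cf _)).
- by apply: cvgN; exact: (cvgNy_compNP F (nbhs l)).1.
- by move=> x _; case: (dG x).
- apply: cvg_at_right_filter.
  have : derivable (fun y => - F (- y)) (- b) 1 by case: (dG (- b)).
  by move/derivable1_diffP/differentiable_continuous.
- by move=> x _; rewrite derive1E; case: (dG x).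
Qed.

Lemma ge0_integrable_fin (g : R -> R) (D : set R) (r : R) :
  measurable D -> continuous g -> (forall x, D x -> 0 <= g x) ->
  (\int[mu]_(x in D) (g x)%:E = r%:E)%E -> mu.-integrable D (EFin \o g).
Proof.
move=> mD cg g0 gi; apply/integrableP; split.
  apply/measurable_EFinP; apply: measurable_funTS.
  exact: continuous_measurable_fun.
under eq_integral => x.
  rewrite inE => Dx.
  rewrite /= ger0_norm; last exact: g0.
  over.
by rewrite gi ltry.
Qed.

Lemma ftc_Ny_signed (f F h H : R -> R) (b l m : R) :
  continuous f -> continuous h -> (forall x, x <= b -> `|f x| <= h x) ->
  (forall x : R, is_derive x (1:R) F (f x)) ->
  (forall x : R, is_derive x (1:R) H (h x)) ->
  F x @[x --> -oo] --> l -> H x @[x --> -oo] --> m ->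
  Rintegral mu `]-oo, b] f = F b - l.
Proof.
move=> cf ch fh dF dH Fl Hm.
have cfh : continuous (fun x => f x + h x).
  by move=> x; apply: continuousD; [exact: cf|exact: ch].
have i1 : (\int[mu]_(x in `]-oo, b]) (f x + h x)%:E = ((F \+ H) b - (l + m))%:E)%E.
  apply: ftc_Ny.
  - exact: cfh.
  - move=> x xb; have := fh x xb; rewrite ler_norml => /andP[h1 _].
    by rewrite -lerBlDr sub0r.
  - exact: cvgD.
have i2 : (\int[mu]_(x in `]-oo, b]) (h x)%:E = (H b - m)%:E)%E.
  apply: ftc_Ny => // x xb; exact: le_trans (normr_ge0 _) (fh x xb).
have mD : measurable (`]-oo, b]%classic : set R) by [].
have int1 := ge0_integrable_fin _ _ _ mD cfh _ i1.
have int2 := ge0_integrable_fin _ _ _ mD ch _ i2.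
rewrite /Rintegral.
under eq_integral => x _ do rewrite -[f x](addrK (h x)) EFinB.
rewrite integralB_EFin //; last 2 first.
- apply: int1 => x; rewrite /= in_itv /= => xb.
  have := fh x xb; rewrite ler_norml => /andP[h1 _].
  by rewrite -lerBlDr sub0r.
- apply: int2 => x; rewrite /= in_itv /= => xb.
  exact: le_trans (normr_ge0 _) (fh x xb).
rewrite i1 i2 /=.
by ring.
Qed.

Lemma dlin (k x : R) : is_derive x (1:R) (fun y => k * y) k.
Proof.
have := @is_deriveZ R R R id k x 1 1 (is_derive_id x 1).
by rewrite /GRing.scale /= mulr1.
Qed.

Lemma dcosk (k x : R) : is_derive x (1:R) (fun y => cos (k * y)) (- sin (k * x) * k).
Proof. exact: (is_derive1_comp (f:=cos) (g:=fun y => k * y) (is_derive_cos (k*x)) (dlin k x)). Qed.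

Lemma dsink (k x : R) : is_derive x (1:R) (fun y => sin (k * y)) (cos (k * x) * k).
Proof. exact: (is_derive1_comp (f:=sin) (g:=fun y => k * y) (is_derive_sin (k*x)) (dlin k x)). Qed.

Lemma dFc (c k x : R) : is_derive x (1:R)
  (fun y => c / (1 + k ^+ 2) * (expR y * (cos (k * y) + k * sin (k * y))))
  (c * (cos (k * x) * expR x)).
Proof.
have h3 := is_deriveD (dcosk k x) (is_deriveZ k (dsink k x)).
have h4 := is_deriveM (is_derive_expR x) h3.
have h5 := is_deriveZ (c / (1 + k ^+ 2)) h4.
have nz : 1 + k ^+ 2 != 0 by rewrite gt_eqF // ltr_pwDl // sqr_ge0.
refine (is_derive_eq h5 _).
rewrite /GRing.scale /= !fctE /GRing.scale /=.
change (k *: sin (k * x)) with (k * sin (k * x)).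
by field.
Qed.

Lemma dFs (c k x : R) : is_derive x (1:R)
  (fun y => c / (1 + k ^+ 2) * (expR y * (sin (k * y) - k * cos (k * y))))
  (c * (sin (k * x) * expR x)).
Proof.
have h3 := is_deriveB (dsink k x) (is_deriveZ k (dcosk k x)).
have h4 := is_deriveM (is_derive_expR x) h3.
have h5 := is_deriveZ (c / (1 + k ^+ 2)) h4.
have nz : 1 + k ^+ 2 != 0 by rewrite gt_eqF // ltr_pwDl // sqr_ge0.
refine (is_derive_eq h5 _).
rewrite /GRing.scale /= !fctE /GRing.scale /=.
change (k *: cos (k * x)) with (k * cos (k * x)).
by field.
Qed.

Lemma dH (c x : R) : is_derive x (1:R) (fun y => c * expR y) (c * expR x).
Proof.
have h5 := is_deriveZ c (is_derive_expR x).
refine (is_derive_eq h5 _).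
by rewrite /GRing.scale.
Qed.

Lemma expR_Ny : (@expR R) x @[x --> -oo] --> 0.
Proof. by apply/cvgNy_compNP; exact: cvgr_expR. Qed.

Lemma cvg_expB (M K : R) (B : R -> R) : (forall x, `|B x| <= K) ->
  (fun x => M * (expR x * B x)) x @[x --> -oo] --> 0.
Proof.
move=> hB.
have e1 : (fun x => `|M| * K * expR x) x @[x --> -oo] --> 0.
  rewrite -(mulr0 (`|M| * K)); apply: cvgM => //; [exact: cvg_cst | exact: expR_Ny].
apply: (@squeeze_cvgr _ _ _ _ (fun x => - (`|M| * K * expR x)) (fun x => `|M| * K * expR x) _ _ 0).
- apply: nearW => x /=; rewrite -ler_norml normrM normrM (ger0_norm (expR_ge0 x)).
  have h1 : 0 <= `|M| * expR x by rewrite mulr_ge0 // expR_ge0.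
  have := hB x; nra.
- rewrite -oppr0; exact: cvgN.
- exact: e1.
Qed.

Lemma derivable_cont (g : R -> R) : (forall x : R, derivable g x (1:R)) -> continuous g.
Proof. by move=> h x; apply/differentiable_continuous/derivable1_diffP. Qed.

Lemma cont_cexp (c k : R) : continuous (fun x : R => c * (cos (k * x) * expR x)).
Proof.
apply: derivable_cont => x.
have [h _] := is_deriveZ c (is_deriveM (dcosk k x) (is_derive_expR x)).
exact h.
Qed.

Lemma cont_sexp (c k : R) : continuous (fun x : R => c * (sin (k * x) * expR x)).
Proof.
apply: derivable_cont => x.
have [h _] := is_deriveZ c (is_deriveM (dsink k x) (is_derive_expR x)).
exact h.
Qed.

Lemma cont_hexp (c : R) : continuous (fun x : R => c * expR x).
Proof.
apply: derivable_cont => x; have [h _] := dH c x; exact h.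
Qed.

Lemma cvg_hexp (c : R) : (fun x : R => c * expR x) x @[x --> -oo] --> 0.
Proof.
rewrite -(mulr0 c); apply: cvgM => //; [exact: cvg_cst | exact: expR_Ny].
Qed.


Lemma int_cos (c k b : R) : Rintegral mu `]-oo, b] (fun x => c * (cos (k * x) * expR x)) =
  c / (1 + k ^+ 2) * (expR b * (cos (k * b) + k * sin (k * b))).
Proof.
apply: etrans; first apply: (@ftc_Ny_signed _ (fun x => c / (1 + k ^+ 2) * (expR x * (cos (k * x) + k * sin (k * x)))) (fun x => `|c| * expR x) (fun x => `|c| * expR x) b 0 0).
- exact: cont_cexp.
- exact: cont_hexp.
- move=> x _; rewrite normrM normrM (ger0_norm (expR_ge0 x)).
  apply: (ler_wpM2l (normr_ge0 c)); exact: (ler_piMl (expR_ge0 x) (cos_max _)).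
- move=> x; exact: dFc.
- apply: (@cvg_expB _ (1 + `|k|)) => x.
  apply: le_trans (ler_normD _ _) _; rewrite normrM.
  have := cos_max (k * x); have := sin_max (k * x); have := normr_ge0 k; nra.
- exact: cvg_hexp.
- by rewrite subr0.
Qed.

Lemma int_sin (c k b : R) : Rintegral mu `]-oo, b] (fun x => c * (sin (k * x) * expR x)) =
  c / (1 + k ^+ 2) * (expR b * (sin (k * b) - k * cos (k * b))).
Proof.
apply: etrans; first apply: (@ftc_Ny_signed _ (fun x => c / (1 + k ^+ 2) * (expR x * (sin (k * x) - k * cos (k * x)))) (fun x => `|c| * expR x) (fun x => `|c| * expR x) b 0 0).
- exact: cont_sexp.
- exact: cont_hexp.
- move=> x _; rewrite normrM normrM (ger0_norm (expR_ge0 x)).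
  apply: (ler_wpM2l (normr_ge0 c)); exact: (ler_piMl (expR_ge0 x) (sin_max _)).
- move=> x; exact: dFs.
- apply: (@cvg_expB _ (1 + `|k|)) => x.
  apply: le_trans (ler_normB _ _) _; rewrite normrM.
  have := cos_max (k * x); have := sin_max (k * x); have := normr_ge0 k; nra.
- exact: cvg_hexp.
- by rewrite subr0.
Qed.

Lemma Rint_patch (g : R -> R) (b : R) :
  Rintegral mu setT (fun x => if x <= b then g x else 0) = Rintegral mu `]-oo, b] g.
Proof.
rewrite /Rintegral [in RHS]integral_mkcond; congr fine; apply: eq_integral => x _.
rewrite patchE.
case: (boolP (x <= b)) => h.
  by rewrite mem_set //= in_itv /= h.
by rewrite memNset //= in_itv /= (negbTE h).
Qed.

Lemma fsq_E1 (xi1 xi2 k : R) : fourier_sqnorm (E1 xi1 xi2) k =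
  ((2 * pi)^-1) ^+ 2 * (1 - expR (xi1 - xi2)) ^+ 2 / (1 + k ^+ 2).
Proof.
set c := expR (- xi1) - expR (- xi2).
have hE : forall t : R -> R, (fun x => t x * E1 xi1 xi2 x) =
    (fun x => if x <= xi1 then c * (t x * expR x) else 0).
  move=> t; apply/funext => x; rewrite /E1; case: ifP => _; last by rewrite mulr0.
  by rewrite /c !expRD; ring.
rewrite /fourier_sqnorm /fourier_re /fourier_im.
rewrite (hE (fun x => cos (k * x))) (hE (fun x => sin (k * x))) !Rint_patch int_cos int_sin.
have hc : c * expR xi1 = 1 - expR (xi1 - xi2).
  by rewrite /c mulrBl -!expRD addNr expR0 [- xi2 + xi1]addrC.
rewrite -hc.
have nz : 1 + k ^+ 2 != 0 by rewrite gt_eqF // ltr_pwDl // sqr_ge0.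
have npi : pi != 0 :> R by rewrite gt_eqF // pi_gt0.
set C := cos (k * xi1); set S := sin (k * xi1); set e := expR xi1.
have cs : C ^+ 2 + S ^+ 2 = 1 by rewrite /C /S cos2Dsin2.
set p := (2 * pi)^-1.
clearbody C S e c p.
transitivity (p ^+ 2 * (c * e) ^+ 2 / (1 + k ^+ 2) ^+ 2 *
   ((C + k * S) ^+ 2 + (S - k * C) ^+ 2)).
  by field; rewrite ?nz.
rewrite (_ : (C + k * S) ^+ 2 + (S - k * C) ^+ 2 = (1 + k ^+ 2) * (C ^+ 2 + S ^+ 2)); last by ring.
by rewrite cs mulr1; field; rewrite ?nz.
Qed.

Definition psi (s : R) (k : R) : R := 2 * (1 + `|k|) `^ (s - 2).

Lemma powR_cont_pos (q y : R) : 0 < y -> {for y, continuous (fun z : R => z `^ q)}.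
Proof.
move=> y0; have [h _] := is_derive1_powR q y0.
by apply/differentiable_continuous/derivable1_diffP.
Qed.

Lemma psi_cont (s : R) : continuous (psi s).
Proof.
move=> x; rewrite /psi.
apply: (@continuousM _ _ (fun=> 2) (fun k : R => (1 + `|k|) `^ (s - 2))); first exact: cvg_cst.
apply: (@continuous_comp _ _ _ (fun k : R => 1 + `|k|) (fun z : R => z `^ (s - 2))).
  apply: continuousD; first exact: cvg_cst.
  exact: norm_continuous.
apply: powR_cont_pos.
by rewrite ltr_pwDl // normr_ge0.
Qed.

Lemma psi_ge0 (s k : R) : 0 <= psi s k.
Proof. by rewrite /psi mulr_ge0 // powR_ge0. Qed.

Lemma psi_bound (s k : R) : 0 <= s -> `|k| `^ s / (1 + k ^+ 2) <= psi s k.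
Proof.
move=> s0.
set y := 1 + `|k|.
have y1 : 1 <= y by rewrite /y lerDl normr_ge0.
have y0 : 0 < y by apply: lt_le_trans y1.
have D0 : 0 < 1 + k ^+ 2 by rewrite ltr_pwDl // sqr_ge0.
have h1 : `|k| `^ s <= y `^ s.
  apply: ge0_ler_powR => //; rewrite ?nnegrE ?normr_ge0 ?ltW //.
  rewrite /y; lra.
have h2 : y `^ (s - 2) = y `^ s / y ^+ 2.
  rewrite powRB; last by rewrite (gt_eqF y0) implybT.
  by rewrite powR_mulrn // ltW.
have h3 : y ^+ 2 <= 2 * (1 + k ^+ 2).
  rewrite /y; have := sqr_ge0 (`|k| - 1); rewrite -(real_normK (num_real k)); nra.
have Y0 : 0 < y ^+ 2 by rewrite exprn_gt0.
rewrite /psi -/y h2.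
have A0 : 0 <= y `^ s by rewrite powR_ge0.
apply: le_trans (_ : y `^ s / (1 + k ^+ 2) <= _).
  by rewrite ler_pM2r ?invr_gt0.
rewrite ler_pdivrMr //.
rewrite (_ : 2 * (y `^ s / y ^+ 2) * (1 + k ^+ 2) = y `^ s * (2 * (1 + k ^+ 2) / y ^+ 2)); last first.
  by ring.
rewrite -[leLHS]mulr1 ler_wpM2l //.
by rewrite ler_pdivlMr // mul1r.
Qed.

Lemma powR_y0 (q : R) : q < 0 -> (fun x : R => (1 + x) `^ q) x @[x --> +oo] --> 0.
Proof.
move=> q0; apply/cvgrPdist_le => e e0.
set X := e `^ (q^-1).
have X0 : 0 < X by rewrite /X powR_gt0.
have eX : e = (X `^ (- q))^-1.
  rewrite -powRN opprK /X -powRrM mulVf ?powRr1 ?ltW //.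
  by rewrite lt_eqF.
near=> x.
have hx : X <= x by near: x; apply: nbhs_pinfty_ge; rewrite num_real.
rewrite sub0r normrN ger0_norm ?powR_ge0 //.
rewrite -[q]opprK powRN eX.
rewrite lef_pV2 ?posrE ?powR_gt0 //; last lra.
apply: ge0_ler_powR; rewrite ?nnegrE; lra.
Unshelve. all: by end_near.
Qed.

Lemma dPsiF (s x : R) : s != 1 -> -1 < x ->
  is_derive x (1:R) (fun y => 2 / (s - 1) * (1 + y) `^ (s - 1)) (2 * (1 + x) `^ (s - 2)).
Proof.
move=> s1 x1.
have h1 := is_deriveD (is_derive_cst (1:R) x 1) (is_derive_id x 1).
have x0 : 0 < 1 + x by lra.
have h2 := is_derive1_comp (f := fun z : R => z `^ (s - 1)) (g := fun y : R => 1 + y)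
   (is_derive1_powR (s - 1) x0) h1.
have h3 := is_deriveZ (2 / (s - 1)) h2.
refine (is_derive_eq h3 _).
rewrite /GRing.scale /= (_ : s - 1 - 1 = s - 2); last by ring.
have : s - 1 != 0 by rewrite subr_eq0.
move: ((1 + x) `^ (s - 2)) => p nz.
by field.
Qed.

Lemma int_psi (s : R) : 0 < s < 1 -> (\int[mu]_x (psi s x)%:E = (4 / (1 - s))%:E)%E.
Proof.
move=> /andP[s0 s1].
have sn1 : s != 1 by rewrite lt_eqF.
rewrite ge0_symfun_integralT; last 3 first.
- exact: psi_ge0.
- exact: psi_cont.
- by move=> x; rewrite /psi /= normrN.
rewrite -set_itvcy.
have dF : forall x : R, -1 < x ->
    is_derive x (1:R) (fun y => 2 / (s - 1) * (1 + y) `^ (s - 1)) (2 * (1 + x) `^ (s - 2)).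
  by move=> x; apply: dPsiF.
rewrite (@ge0_continuous_FTC2y R (psi s) (fun x => 2 / (s - 1) * (1 + x) `^ (s - 1)) 0 0).
- rewrite addr0 powR1 mulr1 -EFinB -EFinM; congr EFin.
  have : s - 1 != 0 by rewrite subr_eq0.
  have : 1 - s != 0 by rewrite subr_eq0 eq_sym.
  move=> h1 h2; field; rewrite ?h1 ?h2 //.
- by move=> x _; exact: psi_ge0.
- exact/continuous_subspaceT/psi_cont.
- rewrite -(mulr0 (2 / (s - 1))); apply: cvgM; first exact: cvg_cst.
  by apply: powR_y0; lra.
- by move=> x x0; have [h _] := dF x (lt_trans (ltrN10 _) x0); exact h.
- have [h _] := dF 0 (ltrN10 _).
  have c : {for 0, continuous (fun y : R => 2 / (s - 1) * (1 + y) `^ (s - 1))}.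
    by apply/differentiable_continuous/derivable1_diffP.
  exact: cvg_at_right_filter c.
- move=> x; rewrite in_itv /= andbT => x0.
  rewrite derive1E; have [_ ->] := dF x (lt_trans (ltrN10 _) x0).
  by rewrite /psi ger0_norm // ltW.
Qed.

End S.
Section S.
Context {R : realType}.
Notation mu := (@lebesgue_measure R).
Lemma cont_den (x : R) : derivable (fun k : R => 1 + k ^+ 2) x (1:R).
Proof.
have [h _] := is_deriveD (is_derive_cst (1:R) x 1) (is_deriveX 2 (is_derive_id x 1)).
exact h.
Qed.

Lemma cont_f (P : R) : continuous (fun k : R => P / (1 + k ^+ 2)).
Proof.
move=> x.
have nz : 1 + x ^+ 2 != 0 by rewrite gt_eqF // ltr_pwDl // sqr_ge0.
apply: (@continuousM _ _ (fun=> P) (fun k : R => (1 + k ^+ 2)^-1)); first exact: cvg_cst.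
apply: continuousV => //.
by apply/differentiable_continuous/derivable1_diffP; exact: cont_den.
Qed.

Lemma meas_f1 (s P : R) : measurable_fun setT (fun k : R => `|k| `^ s * (P / (1 + k ^+ 2))).
Proof.
apply: measurable_funM.
  apply: (measurableT_comp (measurable_powR s)); exact: normr_measurable.
exact: continuous_measurable_fun (cont_f P).
Qed.
End S.

Theorem lemma3p1 (R : realType) (sigma : R) :
  0 < sigma < 2^-1 ->
  exists C : R, 0 < C /\
    forall xi1 xi2 : R, xi1 <= xi2 ->
      (\int[lebesgue_measure]_(k in [set: R])
          ((`|k| `^ (2 * sigma)) * fourier_sqnorm (E1 xi1 xi2) k)%:E
        <= ((C * (xi2 - xi1)) ^+ 2)%:E)%E.
Proof.
move=> /andP[s0 s1].
have s2 : 2 * sigma < 1.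
  have h : 2 * sigma < 2 * 2^-1 by rewrite ltr_pM2l.
  by rewrite divff ?pnatr_eq0 in h.
have s01 : 0 < 2 * sigma < 1 by rewrite s2 mulr_gt0.
set s := 2 * sigma.
set K := 4 / (1 - s).
have K0 : 0 < K by rewrite divr_gt0 // subr_gt0.
exists (1 + K); split; first by rewrite addr_gt0.
move=> xi1 xi2 le12.
set a := 1 - expR (xi1 - xi2).
have a0 : 0 <= a by rewrite /a subr_ge0 expR_le1 subr_le0.
have ad : a <= xi2 - xi1 by have := expR_ge1Dx (xi1 - xi2); rewrite /a; lra.
pose q : R := (2 * pi)^-1 ^+ 2.
have q0 : 0 <= q by rewrite /q exprn_ge0 // invr_ge0 mulr_ge0 // pi_ge0.
have q1 : q <= 1.
  rewrite /q exprn_ile1 // ?invr_ge0 ?mulr_ge0 ?pi_ge0 //.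
  rewrite invf_le1; last by rewrite mulr_gt0 // pi_gt0.
  by have := @pi_ge2 R; lra.
pose P : R := q * a ^+ 2.
have P0 : 0 <= P by rewrite /P mulr_ge0 // sqr_ge0.
under eq_integral => k _ do rewrite fsq_E1 -/a -/q -/P.
apply: (@le_trans _ _ (\int[lebesgue_measure]_(k in [set: R]) (P * psi s k)%:E)%E).
  apply: ge0_le_integral => //.
  - move=> k _; rewrite lee_fin mulr_ge0 ?powR_ge0 // divr_ge0 // ?mulr_ge0 ?sqr_ge0 //.
    by rewrite addr_ge0 // sqr_ge0.
  - apply/measurable_EFinP; exact: meas_f1.
  - apply/measurable_EFinP; apply: measurable_funM => //.
    exact: continuous_measurable_fun (psi_cont s).
  - move=> k _; rewrite lee_fin.
    have hs : 0 <= s by rewrite /s mulr_ge0 // ltW.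
    have := psi_bound s k hs.
    move=> hb.
    rewrite (_ : `|k| `^ s * (P / (1 + k ^+ 2)) = P * (`|k| `^ s / (1 + k ^+ 2))); last by ring.
    by rewrite ler_wpM2l.
under eq_integral => k _ do rewrite EFinM.
rewrite ge0_integralZl_EFin //; last 2 first.
- by move=> k _; rewrite lee_fin psi_ge0.
- apply/measurable_EFinP; exact: continuous_measurable_fun (psi_cont s).
rewrite int_psi // -EFinM lee_fin -/K.
have hP : P <= (xi2 - xi1) ^+ 2.
  rewrite /P -[leRHS]mul1r; apply: ler_pM => //; first exact: sqr_ge0.
  by rewrite ler_sqr // ?nnegrE // subr_ge0.
have d0 : 0 <= (xi2 - xi1) ^+ 2 by exact: sqr_ge0.
move: hP d0 K0; set D := (xi2 - xi1) ^+ 2; rewrite exprMn -/D => hP d0 K0.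
nra.
Qed.
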